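(* Let $f:\mathbb{R}^n\to\mathbb{R}$ be a smooth convex function whose gradient is $L$-Lipschitz continuous, and let $h$ be either $h_{\text{b}}$ or $h_{\text{s}}$ (defined in the context). Consider the problem $\min_{\mathbf{x}\in\mathbb{R}^n} F(\mathbf{x})\triangleq f(\mathbf{x})+h(\mathbf{x})$. Then the following hierarchy of necessary optimality conditions holds: (1) every $L$-stationary point is a basic stationary point; (2) every block-$1$ stationary point is an $L$-stationary point; (3) for every $1\le k_2\le k_1\le n$, every block-$k_1$ stationary point is a block-$k_2$ stationary point (so block-$n$ $\Rightarrow\cdots\Rightarrow$ block-$2$ $\Rightarrow$ block-$1$); (4) a point is a block-$n$ stationary point if and only if it is a global optimal solution of $\min_{\mathbf{x}} F(\mathbf{x})$.
   Context: Here $h_{\text{b}}(\mathbf{x})\triangleq I_{\Psi}(\mathbf{x})$ with $\Psi=\{-1,1\}^n$, and $h_{\text{s}}(\mathbf{x})\triangleq\lambda\|\mathbf{x}\|_0+I_{\Omega}(\mathbf{x})$ with $\Omega=[-\rho\mathbf{1},\rho\mathbf{1}]$, where $\lambda,\rho>0$, $\|\mathbf{x}\|_0$ counts nonzero entries, and $I_S$ is the indicator function of $S$ ($0$ on $S$, $+\infty$ outside). Definitions: - Basic stationary point: $\breve{\mathbf{x}}$ such that, if $h=h_{\text{b}}$, $\breve{\mathbf{x}}\in\{-1,+1\}^n$; if $h=h_{\text{s}}$, $\breve{\mathbf{x}}_S=\arg\min_{\mathbf{z}\in[-\rho\mathbf{1},\rho\mathbf{1}]}\tfrac{L}{2}\|\mathbf{z}-(\breve{\mathbf{x}}-\nabla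 f(\breve{\mathbf{x}})/L)_S\|_2^2$ where $S=\{i:\breve{\mathbf{x}}_i\neq0\}$ and $\mathbf{v}_S$ denotes the subvector indexed by $S$. - $L$-stationary point: $\grave{\mathbf{x}}$ such that $\grave{\mathbf{x}}\in\arg\min_{\mathbf{x}}\, g(\mathbf{x},\grave{\mathbf{x}})+h(\mathbf{x})$, where $g(\mathbf{x},\mathbf{z})\triangleq f(\mathbf{z})+\langle\nabla f(\mathbf{z}),\mathbf{x}-\mathbf{z}\rangle+\tfrac{L}{2}\|\mathbf{x}-\mathbf{z}\|_2^2$. - Block-$k$ stationary point: $\bar{\mathbf{x}}$ such that for every $B\subseteq\{1,\dots,n\}$ with $|B|=k$ and $N=\{1,\dots,n\}\setminus B$, $\bar{\mathbf{x}}\in\arg\min_{\mathbf{z}\in\mathbb{R}^n}\{F(\mathbf{z}) : \mathbf{z}_N=\bar{\mathbf{x}}_N\}$. *)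

(* Defs.v *)
From HB Require Import structures.
From mathcomp Require Import all_boot all_order all_algebra.
From mathcomp Require Import all_classical all_reals all_analysis.
Set Implicit Arguments. Unset Strict Implicit. Unset Printing Implicit Defensive.
Import Order.TTheory GRing.Theory Num.Theory.
Import numFieldNormedType.Exports.
Local Open Scope ring_scope.

Section Defs.
Variables (R : realType) (n : nat).
Notation vec := 'rV[R]_n.

Definition dotv (u v : vec) : R := \sum_(i < n) u ord0 i * v ord0 i.
Definition sqnorm2 (v : vec) : R := \sum_(i < n) (v ord0 i) ^+ 2.
Definition norm2 (v : vec) : R := Num.sqrt (sqnorm2 v).

Definition has_gradient (f : vec -> R) (grad : vec -> vec) : Prop :=
  forall x, differentiable f x /\ forall v, 'd f x v = dotv (grad x) v.

Definition convex_fun (f : vec -> R) : Prop :=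
  forall x y (t : R), 0 <= t <= 1 ->
    f ((1 - t) *: x + t *: y) <= (1 - t) * f x + t * f y.

Definition lipschitz2 (g : vec -> vec) (L : R) : Prop :=
  forall x y, norm2 (g x - g y) <= L * norm2 (x - y).

Definition l0 (x : vec) : nat := #|[set i : 'I_n | x ord0 i != 0]|.

Definition in_box (rho : R) (x : vec) : bool :=
  [forall i : 'I_n, (- rho <= x ord0 i) && (x ord0 i <= rho)].

Definition in_binary (x : vec) : bool :=
  [forall i : 'I_n, (x ord0 i == 1) || (x ord0 i == -1)].

Definition h_b (x : vec) : \bar R := if in_binary x then 0%E else +oo%E.
Definition h_s (lam rho : R) (x : vec) : \bar R :=
  if in_box rho x then ((lam * (l0 x)%:R)%:E)%E else +oo%E.

Inductive hkind := HB | HS.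

Definition hfun (k : hkind) (lam rho : R) : vec -> \bar R :=
  match k with HB => h_b | HS => h_s lam rho end.

Definition is_argmin (T : Type) (phi : T -> \bar R) (x : T) : Prop :=
  (phi x < +oo)%E /\ forall z, (phi x <= phi z)%E.

Definition Fobj (f : vec -> R) (h : vec -> \bar R) (x : vec) : \bar R :=
  ((f x)%:E + h x)%E.

Definition gmaj (f : vec -> R) (grad : vec -> vec) (L : R) (x z : vec) : R :=
  f z + dotv (grad z) (x - z) + L / 2 * sqnorm2 (x - z).

Definition basic_stationary (k : hkind) (grad : vec -> vec) (L rho : R)
    (x : vec) : Prop :=
  match k with
  | HB => in_binary x
  | HS =>
      let w := x - L^-1 *: grad x in
      let S := [set i : 'I_n | x ord0 i != 0] in
      (forall i, i \in S -> - rho <= x ord0 i <= rho) /\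
      forall z : vec, (forall i, i \in S -> - rho <= z ord0 i <= rho) ->
        L / 2 * \sum_(i in S) (x ord0 i - w ord0 i) ^+ 2 <=
        L / 2 * \sum_(i in S) (z ord0 i - w ord0 i) ^+ 2
  end.

Definition L_stationary (f : vec -> R) (grad : vec -> vec) (L : R)
    (h : vec -> \bar R) (x : vec) : Prop :=
  is_argmin (fun y => ((gmaj f grad L y x)%:E + h y)%E) x.

Definition block_stationary (k : nat) (f : vec -> R) (h : vec -> \bar R)
    (x : vec) : Prop :=
  forall B : {set 'I_n}, #|B| = k ->
    is_argmin (fun z : {z : vec | forall i, i \notin B -> z ord0 i = x ord0 i}
                 => Fobj f h (sval z))
              (exist _ x (fun _ _ => erefl)).

End Defs.

(* Main.v *)
Require Import Defs.
From HB Require Import structures.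
From mathcomp Require Import all_boot all_order all_algebra.
From mathcomp Require Import all_classical all_reals all_analysis.
From mathcomp Require Import ring lra zify.
Import Order.TTheory GRing.Theory Num.Theory.
Import numFieldNormedType.Exports.
Local Open Scope ring_scope.

Section S.
Variables (R : realType) (n : nat).
Implicit Types (x y u v : 'rV[R]_n).
Local Open Scope classical_set_scope.

Lemma dphi_lem (f : 'rV[R]_n -> R) grad x v s :
  has_gradient f grad ->
  derivable (fun t : R => f (x + t *: v)) s 1 /\
  'D_1 (fun t : R => f (x + t *: v)) s = dotv (grad (x + s *: v)) v.
Proof.
move=> hg.
have E : (fun h : R => h^-1 *: (((fun t : R => f (x + t *: v)) \o shift s) (h *: 1) - f (x + s *: v)))
   = (fun h : R => h^-1 *: ((f \o shift (x + s *: v)) (h *: v) - f (x + s *: v))).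
  apply/funext => h /=; congr (_ *: (f _ - _)).
  by rewrite [h *: 1]mulr1 scalerDl addrCA addrA.
have [df dv] := hg (x + s *: v).
split.
  rewrite /derivable E; exact: (@diff_derivable _ _ _ f _ v df).
by rewrite /derive E -/(derive _ _ _) deriveE.
Qed.

Lemma dotv_delta u (i : 'I_n) (d : R) : dotv u (d *: delta_mx ord0 i) = u ord0 i * d.
Proof.
rewrite /dotv (bigD1 i) //= big1 => [|j ji]; rewrite !mxE ?eqxx ?(negbTE ji) /=.
  by rewrite mulr1 addr0.
by rewrite mulr0 mulr0.
Qed.

Lemma sqnorm_delta (i : 'I_n) (d : R) : sqnorm2 (d *: delta_mx ord0 i) = d ^+ 2.
Proof.
rewrite /sqnorm2 (bigD1 i) //= big1 => [|j ji]; rewrite !mxE ?eqxx ?(negbTE ji) /=.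
  by rewrite mulr1 addr0.
by rewrite mulr0 expr0n.
Qed.

Lemma coord_le_norm2 u (i : 'I_n) : `|u ord0 i| <= norm2 u.
Proof.
rewrite /norm2 -sqrtr_sqr ler_sqrt; last first.
  by rewrite /sqnorm2 sumr_ge0 // => j _; rewrite sqr_ge0.
rewrite /sqnorm2 (bigD1 i) //= lerDl sumr_ge0 // => j _; exact: sqr_ge0.
Qed.


Lemma descent (f : 'rV[R]_n -> R) grad L x (i : 'I_n) (d : R) :
  has_gradient f grad -> lipschitz2 grad L ->
  f (x + d *: delta_mx ord0 i) <= f x + grad x ord0 i * d + L / 2 * d ^+ 2.
Proof.
move=> hg hl.
set v := d *: delta_mx ord0 i.
set c := grad x ord0 i * d.
set K := L / 2 * d ^+ 2.
pose phi := fun t : R => f (x + t *: v).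
pose psi : R -> R := phi - (c \*: (@id R)) - (K \*: ((@id R) \* (@id R))).
pose dpsi := fun t : R => grad (x + t *: v) ord0 i * d - c - K * (t + t).
have Dpsi (t : R) : is_derive t 1 psi (dpsi t).
  have [d1 d2] := dphi_lem f grad x v t hg.
  have Hphi : is_derive t 1 phi (grad (x + t *: v) ord0 i * d).
    by rewrite -dotv_delta -d2; apply: derivableP.
  rewrite /psi /dpsi; apply: is_derive_eq.
  by rewrite /= [c%:A]mulr1 [t%:A]mulr1.
have cont : {within `[0, 1], continuous psi}.
  apply: derivable_within_continuous => t _; exact: (@ex_derive _ _ _ _ _ _ _ (Dpsi t)).
have [t t01 Ht] := MVT_segment ler01 (fun t _ => Dpsi t) cont.
have : dpsi t <= 0.
  rewrite /dpsi -mulrBl.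
  have t0 : 0 <= t by move: t01; rewrite in_itv /= => /andP[].
  set a := grad (x + t *: v) ord0 i - grad x ord0 i.
  have ha : `|a| <= L * (t * `|d|).
    have := coord_le_norm2 (grad (x + t *: v) - grad x) i.
    rewrite !mxE => H; apply: le_trans H _.
    apply: le_trans (hl _ _) _.
    rewrite addrAC subrr add0r /v scalerA /norm2 sqnorm_delta sqrtr_sqr normrM ger0_norm //.
  have h1 : a * d <= `|a| * `|d| by rewrite -normrM ler_norm.
  have h2 : `|a| * `|d| <= L * (t * `|d|) * `|d| by rewrite ler_wpM2r.
  have h3 : L * (t * `|d|) * `|d| = K * (t + t).
    have hd : `|d| * `|d| = d ^+ 2 by rewrite -normrM -expr2 ger0_norm ?sqr_ge0.
    rewrite /K; transitivity (L * t * (`|d| * `|d|)); first by ring.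
    by rewrite hd; field.
  lra.
move=> hle.
have Epsi s : psi s = f (x + s *: v) - c * s - K * (s * s) by [].
move: Ht; rewrite subr0 mulr1 !Epsi scale0r addr0 scale1r !mulr0 !mulr1 !subr0 => H.
lra.
Qed.
End S.

Section S3.
Variables (R : realType) (n : nat).
Implicit Types (x y u v : 'rV[R]_n).

Definition upd x (i : 'I_n) (t : R) := x + (t - x ord0 i) *: delta_mx ord0 i.

Lemma updE x i t j : upd x i t ord0 j = if j == i then t else x ord0 j.
Proof.
rewrite /upd !mxE eqxx /=; case: eqP => [->|_]; first by rewrite mulr1 addrC subrK.
by rewrite mulr0 addr0.
Qed.

Lemma gmaj_sum (f : 'rV[R]_n -> R) grad L y x :
  gmaj f grad L y x = f x + \sum_j (grad x ord0 j * (y ord0 j - x ord0 j)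
                                    + L / 2 * (y ord0 j - x ord0 j) ^+ 2).
Proof.
rewrite /gmaj /dotv /sqnorm2 mulr_sumr -addrA big_split /=.
by congr (_ + (_ + _)); apply: eq_bigr => j _; rewrite !mxE.
Qed.

Lemma gmaj_xx (f : 'rV[R]_n -> R) grad L x : gmaj f grad L x x = f x.
Proof.
rewrite gmaj_sum big1 ?addr0 // => j _; rewrite subrr mulr0 expr0n /= mulr0 addr0 //.
Qed.

Lemma l0_sum x : ((l0 x)%:R : R) = \sum_j ((x ord0 j != 0)%:R : R).
Proof.
rewrite /l0 -sum1_card natr_sum big_mkcond /=; apply: eq_bigr => j _.
by rewrite inE; case: ifP.
Qed.

Lemma descent_upd (f : 'rV[R]_n -> R) grad L x i t :
  has_gradient f grad -> lipschitz2 grad L ->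
  f (upd x i t) <= f x + (grad x ord0 i * (t - x ord0 i) + L / 2 * (t - x ord0 i) ^+ 2).
Proof. by move=> hg hl; rewrite addrA; exact: descent. Qed.

Lemma block1_upd (f : 'rV[R]_n -> R) h x i t :
  block_stationary 1 f h x ->
  (Fobj f h x < +oo)%E /\ (Fobj f h x <= Fobj f h (upd x i t))%E.
Proof.
move=> H; have [fin le] := H [set i] (cards1 i).
split; first exact: fin.
have P : forall j, j \notin [set i] -> upd x i t ord0 j = x ord0 j.
  by move=> j; rewrite !inE updE => /negbTE ->.
exact: (le (exist _ (upd x i t) P)).
Qed.


Lemma hs_coord (f : 'rV[R]_n -> R) grad L lam rho x i t :
  has_gradient f grad -> lipschitz2 grad L ->
  block_stationary 1 f (h_s lam rho) x -> - rho <= t <= rho ->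
  in_box rho x /\
  lam * (x ord0 i != 0)%:R <= (grad x ord0 i * (t - x ord0 i)
     + L / 2 * (t - x ord0 i) ^+ 2) + lam * (t != 0)%:R.
Proof.
move=> hg hl hb ht.
have [fin le] := block1_upd f _ x i t hb.
have bx : in_box rho x by move: fin; rewrite /Fobj /h_s; case: ifP.
split=> //.
have bx' : in_box rho (upd x i t).
  apply/forallP => j; rewrite updE; case: ifP => _ //; exact: (forallP bx j).
move: le; rewrite /Fobj /h_s bx bx' -!EFinD lee_fin !l0_sum.
rewrite (bigD1 i) //= [X in _ <= _ + lam * X](bigD1 i) //= updE eqxx.
have -> : \sum_(j < n | j != i) ((upd x i t ord0 j != 0)%:R : R) =
          \sum_(j < n | j != i) ((x ord0 j != 0)%:R : R).
  by apply: eq_bigr => j /negbTE ji; rewrite updE ji.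
have := descent_upd f grad L x i t hg hl.
rewrite !mulrDr; lra.
Qed.

Lemma hb_coord (f : 'rV[R]_n -> R) grad L x i t :
  has_gradient f grad -> lipschitz2 grad L ->
  block_stationary 1 f (@h_b R n) x -> (t == 1) || (t == -1) ->
  in_binary x /\
  0 <= grad x ord0 i * (t - x ord0 i) + L / 2 * (t - x ord0 i) ^+ 2.
Proof.
move=> hg hl hb ht.
have [fin le] := block1_upd f _ x i t hb.
have bx : in_binary x by move: fin; rewrite /Fobj /h_b; case: ifP.
split=> //.
have bx' : in_binary (upd x i t).
  apply/forallP => j; rewrite updE; case: ifP => _ //; exact: (forallP bx j).
move: le; rewrite /Fobj /h_b bx bx' !adde0 lee_fin.
have := descent_upd f grad L x i t hg hl.
lra.
Qed.


Lemma part2 (f : 'rV[R]_n -> R) grad L k lam rho x :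
  has_gradient f grad -> lipschitz2 grad L ->
  block_stationary 1 f (hfun k lam rho) x -> L_stationary f grad L (hfun k lam rho) x.
Proof.
move=> hg hl; case: k => /= hb.
- have bx : in_binary x.
    apply/forallP => i; have [fin _] := block1_upd f _ x i 1 hb.
    by move: fin; rewrite /Fobj /h_b; case: ifP => [/forallP ->|].
  split; first by rewrite gmaj_xx /h_b bx adde0 ltry.
  move=> y; rewrite /h_b bx; case: ifP => yb; last by rewrite addey // leey.
  rewrite !adde0 lee_fin gmaj_xx gmaj_sum lerDl; apply: sumr_ge0 => j _.
  by have [_ H] := hb_coord f grad L x j (y ord0 j) hg hl hb (forallP yb j).
- have bx : in_box rho x.
    apply/forallP => i; have [fin _] := block1_upd f _ x i 0 hb.
    by move: fin; rewrite /Fobj /h_s; case: ifP => [/forallP ->|].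
  split; first by rewrite gmaj_xx /h_s bx -EFinD ltry.
  move=> y; rewrite /h_s bx; case: ifP => yb; last by rewrite addey // leey.
  rewrite -!EFinD lee_fin gmaj_xx gmaj_sum !l0_sum !mulr_sumr -addrA lerD2l -big_split.
  apply: ler_sum => j _.
  by have [_ H] := hs_coord f grad L lam rho x j (y ord0 j) hg hl hb (forallP yb j).
Qed.


Lemma part1 (f : 'rV[R]_n -> R) grad L k lam rho x :
  0 < L -> 0 < lam -> 0 < rho ->
  L_stationary f grad L (hfun k lam rho) x -> basic_stationary k grad L rho x.
Proof.
move=> L0 lam0 rho0; case: k => /= -[fin le].
  by move: fin; rewrite /h_b; case: ifP.
have bx : in_box rho x by move: fin; rewrite /h_s; case: ifP.
split; first by move=> i _; exact: (forallP bx i).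
move=> z hz.
pose y : 'rV[R]_n := \row_j (if x ord0 j != 0 then z ord0 j else 0).
have yb : in_box rho y.
  apply/forallP => j; rewrite mxE; case: ifP => Hj.
    by apply: hz; rewrite inE Hj.
  by rewrite oppr_le0 ltW.
have := le y; rewrite /h_s bx yb -!EFinD lee_fin gmaj_xx gmaj_sum !l0_sum !mulr_sumr.
rewrite -addrA lerD2l => Hle.
have Hl : \sum_j lam * ((y ord0 j != 0)%:R : R) <= \sum_j lam * ((x ord0 j != 0)%:R : R).
  apply: ler_sum => j _; rewrite mxE; case: ifP => Hj; last by rewrite eqxx.
  apply: ler_wpM2l; first exact: ltW.
  by case: (z ord0 j != 0) => //=; rewrite ler01.
set Q := \sum_j (grad x ord0 j * (y ord0 j - x ord0 j) + L / 2 * (y ord0 j - x ord0 j) ^+ 2).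
have HQ : 0 <= Q.
  have EQs : Q = \sum_j grad x ord0 j * (y ord0 j - x ord0 j) + \sum_j L / 2 * (y ord0 j - x ord0 j) ^+ 2.
    by rewrite /Q big_split.
  move: Hle; rewrite !big_split /=; lra.
have EQ : Q = \sum_(i in [set i0 | x ord0 i0 != 0]) (grad x ord0 i * (z ord0 i - x ord0 i)
                                    + L / 2 * (z ord0 i - x ord0 i) ^+ 2).
  rewrite /Q [RHS]big_mkcond /=; apply: eq_bigr => j _; rewrite inE mxE; case: ifP => // Hj.
  move/negbFE/eqP: Hj => ->; rewrite subrr mulr0 expr0n /= mulr0 addr0 //.
rewrite -subr_ge0 -?mulrBr -sumrB ?mulr_sumr; apply: le_trans HQ _; rewrite EQ le_eqVlt; apply/orP; left; apply/eqP.
apply: eq_bigr => i _; rewrite !mxE.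
field; exact: lt0r_neq0.
Qed.


Lemma extend_set (m : nat) (B : {set 'I_n}) : (#|B| + m <= n)%N ->
  exists B' : {set 'I_n}, B \subset B' /\ #|B'| = (#|B| + m)%N.
Proof.
elim: m B => [|m IH] B hB; first by exists B; rewrite addn0 subxx.
have : (0 < #|~: B|)%N.
  have := cardsC B; rewrite card_ord => E.
  lia.
rewrite card_gt0 => /set0Pn [j]; rewrite inE => jB.
have hB1 : (#|j |: B| + m <= n)%N by rewrite cardsU1 jB add1n addSnnS.
have [B' [sub cB']] := IH _ hB1.
exists B'; split.
  by apply/fintype.subsetP => i iB; apply: (fintype.subsetP sub); rewrite !inE iB orbT.
by rewrite cB' cardsU1 jB add1n addSnnS.
Qed.

Lemma part3 (f : 'rV[R]_n -> R) h (k1 k2 : nat) x :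
  (k2 <= k1)%N -> (k1 <= n)%N ->
  block_stationary k1 f h x -> block_stationary k2 f h x.
Proof.
move=> h21 h1n hb B cB.
have e1 : (#|B| + (k1 - k2) <= n)%N by rewrite cB subnKC.
have [B' [sub cB']] := @extend_set (k1 - k2) B e1.
have e2 : #|B'| = k1 by rewrite cB' cB subnKC.
have [fin le] := hb B' e2.
split; first exact: fin.
move=> [z Pz].
have Pz' : forall i, i \notin B' -> z ord0 i = x ord0 i.
  move=> i iB; apply: Pz; apply: contra iB; exact: (fintype.subsetP sub).
exact: (le (exist _ z Pz')).
Qed.

Lemma part4 (f : 'rV[R]_n -> R) h x :
  block_stationary n f h x <-> is_argmin (Fobj f h) x.
Proof.
split.
  move=> hb; have e : #|[set: 'I_n]| = n by rewrite cardsT card_ord.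
  have [fin le] := hb [set: 'I_n]%SET e.
  split; first exact: fin.
  move=> z.
  have Pz : forall i, i \notin [set: 'I_n] -> z ord0 i = x ord0 i.
    by move=> i; rewrite inE.
  exact: (le (exist _ z Pz)).
move=> [fin le] B _; split; first exact: fin.
by move=> [z Pz]; exact: le.
Qed.

End S3.

Theorem proposition1 (R : realType) (n : nat)
    (f : 'rV[R]_n -> R) (grad : 'rV[R]_n -> 'rV[R]_n) (L : R)
    (k : hkind) (lam rho : R) :
  0 < L -> 0 < lam -> 0 < rho ->
  has_gradient f grad -> convex_fun f -> lipschitz2 grad L ->
  let h := hfun k lam rho in
  [/\ (forall x, L_stationary f grad L h x -> basic_stationary k grad L rho x),
      (forall x, block_stationary 1 f h x -> L_stationary f grad L h x),
      (forall (k1 k2 : nat), (1 <= k2)%N -> (k2 <= k1)%N -> (k1 <= n)%N ->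
         forall x, block_stationary k1 f h x -> block_stationary k2 f h x)
    & (forall x, block_stationary n f h x <-> is_argmin (Fobj f h) x)].
Proof.
move=> L0 lam0 rho0 hg hc hl h; split.
- by move=> x; apply: part1.
- by move=> x; apply: part2.
- by move=> k1 k2 _ h21 h1n x; apply: part3.
- by move=> x; apply: part4.
Qed.
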